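(* There exists a large set of H-designs LH$(5,4u,4,3)$ for every positive integer $u$.
   Context: An H-design H$(n,g,k,t)$ is a triple $(Q,G,B)$ where $Q$ is a set of $ng$ points, $G$ is a partition of $Q$ into $n$ groups of size $g$, and $B$ is a set of $k$-subsets of $Q$ (blocks) such that each block meets each group in at most one point and any $t$ points from $t$ distinct groups lie in exactly one block. A large set of H-designs LH$(n,g,k,t)$ is a partition of the set of all $k$-subsets of $Q$ meeting each group of $G$ in at most one point into pairwise disjoint block sets, each of which forms (with $Q$ and $G$) an H-design H$(n,g,k,t)$. *)

(* Defs.v *)
From mathcomp Require Import all_boot.
Set Implicit Arguments. Unset Strict Implicit. Unset Printing Implicit Defensive.

(* Point set Q = 'I_n * 'I_g : ng points; the group of point x is x.1,
   so G = { {x | x.1 = i} : i < n } is a partition into n groups of size g. *)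
Definition hpoint (n g : nat) := ('I_n * 'I_g)%type.

Definition transverse (n g : nat) (A : {set hpoint n g}) : Prop :=
  forall i : 'I_n, #|[set x in A | x.1 == i]| <= 1.

Definition Hdesign (n g k t : nat) (B : {set {set hpoint n g}}) : Prop :=
  (forall b, b \in B -> #|b| = k /\ transverse b) /\
  (forall S : {set hpoint n g}, #|S| = t -> transverse S ->
     #|[set b in B | S \subset b]| = 1).

Definition transverse_ksets (n g k : nat) : {set {set hpoint n g}} :=
  [set A : {set hpoint n g} | (#|A| == k) &&
     [forall i : 'I_n, #|[set x in A | x.1 == i]| <= 1]].

Definition large_Hset (n g k t : nat) (P : {set {set {set hpoint n g}}}) : Prop :=
  partition P (transverse_ksets n g k) /\ (forall B, B \in P -> @Hdesign n g k t B).

(* Main.v *)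
Require Import Defs.
From mathcomp Require Import all_boot zify.
Set Implicit Arguments. Unset Strict Implicit. Unset Printing Implicit Defensive.

Definition BT : seq (seq (seq (seq nat))) :=
  [:: [:: [:: [:: 0; 0; 0; 0]; [:: 0; 0; 1; 1]; [:: 0; 1; 0; 1]; [:: 0; 1; 1; 0]; [:: 0; 1; 0; 1]]; [:: [:: 0; 0; 0; 0]; [:: 0; 1; 0; 1]; [:: 0; 1; 0; 1]; [:: 0; 1; 0; 1]; [:: 0; 0; 0; 0]]; [:: [:: 0; 0; 0; 0]; [:: 0; 0; 1; 1]; [:: 0; 0; 1; 1]; [:: 0; 0; 1; 1]; [:: 0; 0; 1; 1]]]; [:: [:: [:: 0; 0; 1; 1]; [:: 0; 0; 0; 0]; [:: 0; 0; 0; 0]; [:: 0; 1; 0; 1]; [:: 0; 0; 1; 1]]; [:: [:: 0; 1; 0; 1]; [:: 0; 0; 0; 0]; [:: 0; 0; 1; 1]; [:: 0; 0; 1; 1]; [:: 0; 0; 1; 1]]; [:: [:: 0; 0; 1; 1]; [:: 0; 0; 0; 0]; [:: 0; 1; 1; 0]; [:: 0; 0; 0; 0]; [:: 0; 1; 0; 1]]]; [:: [:: [:: 0; 0; 1; 1]; [:: 0; 0; 0; 0]; [:: 0; 0; 0; 0]; [:: 0; 1; 0; 1]; [:: 0; 0; 1; 1]]; [:: [:: 0; 0; 1; 1]; [:: 0; 1; 1; 0]; [:: 0; 0; 0; 0]; [:: 0; 1; 1; 0]; [:: 0; 1; 1; 0]]; [:: [:: 0; 1; 0; 1]; [:: 0;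 0; 1; 1]; [:: 0; 0; 0; 0]; [:: 0; 1; 0; 1]; [:: 0; 0; 0; 0]]]; [:: [:: [:: 0; 1; 0; 1]; [:: 0; 0; 1; 1]; [:: 0; 1; 1; 0]; [:: 0; 0; 0; 0]; [:: 0; 1; 1; 0]]; [:: [:: 0; 1; 1; 0]; [:: 0; 1; 1; 0]; [:: 0; 0; 1; 1]; [:: 0; 0; 0; 0]; [:: 0; 1; 0; 1]]; [:: [:: 0; 0; 1; 1]; [:: 0; 0; 0; 0]; [:: 0; 1; 1; 0]; [:: 0; 0; 0; 0]; [:: 0; 1; 0; 1]]]; [:: [:: [:: 0; 1; 1; 0]; [:: 0; 1; 0; 1]; [:: 0; 1; 1; 0]; [:: 0; 0; 1; 1]; [:: 0; 0; 0; 0]]; [:: [:: 0; 0; 0; 0]; [:: 0; 1; 0; 1]; [:: 0; 1; 0; 1]; [:: 0; 1; 0; 1]; [:: 0; 0; 0; 0]]; [:: [:: 0; 1; 0; 1]; [:: 0; 0; 1; 1]; [:: 0; 0; 0; 0]; [:: 0; 1; 0; 1]; [:: 0; 0; 0; 0]]]].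
Definition HB : seq (seq nat) := [:: [:: 0; 0; 0]; [:: 1; 0; 0]; [:: 0; 1; 0]; [:: 0; 0; 1]; [:: 1; 1; 1]].
Definition e m k j r := nth 0 (nth [::] (nth [::] (nth [::] BT m) k) j) r.
Definition hb m k := nth 0 (nth [::] HB m) k.
Definition col4 m s0 s1 s2 :=
  (hb m 0 + s0) %% 2 + 2 * ((hb m 1 + s1) %% 2) + 4 * ((hb m 2 + s2) %% 2).
Definition cond4 a xa b xb c xc i r :=
  let m := 10 - (i + (a + (b + c))) in
  col4 m (e m 0 i r + (e m 0 a xa + (e m 0 b xb + e m 0 c xc)))
         (e m 1 i r + (e m 1 a xa + (e m 1 b xb + e m 1 c xc)))
         (e m 2 i r + (e m 2 a xa + (e m 2 b xb + e m 2 c xc))).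
Definition cands a b c :=
  [seq (i, r) | i <- [seq i <- iota 0 5 | [&& i != a, i != b & i != c]], r <- iota 0 4].
Definition check4 :=
  all (fun a => all (fun b => all (fun c =>
   [&& a != b, a != c & b != c] ==>
   all (fun xa => all (fun xb => all (fun xc =>
     let vs := [seq cond4 a xa b xb c xc p.1 p.2 | p <- cands a b c] in
     all (fun k => count_mem k vs == 1) (iota 0 8))
   (iota 0 4)) (iota 0 4)) (iota 0 4))
  (iota 0 5)) (iota 0 5)) (iota 0 5).
Lemma check4_ok : check4.
Proof. vm_compute. reflexivity. Qed.

Lemma col4_lt8 m s0 s1 s2 : col4 m s0 s1 s2 < 8.
Proof.
rewrite /col4.
have h1 := ltn_pmod (hb m 0 + s0) (isT : 0 < 2).
have h2 := ltn_pmod (hb m 1 + s1) (isT : 0 < 2).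
have h3 := ltn_pmod (hb m 2 + s2) (isT : 0 < 2).
lia.
Qed.

Lemma allPi (T : eqType) (p : pred T) s : all p s -> forall x, x \in s -> p x.
Proof. by move/allP. Qed.

Lemma level4 a b c xa xb xc k :
  a < 5 -> b < 5 -> c < 5 -> [&& a != b, a != c & b != c] ->
  xa < 4 -> xb < 4 -> xc < 4 -> k < 8 ->
  exists i r, [/\ i < 5, r < 4, [&& i != a, i != b & i != c] &
                  cond4 a xa b xb c xc i r = k] /\
   forall i' r', i' < 5 -> r' < 4 -> [&& i' != a, i' != b & i' != c] ->
     cond4 a xa b xb c xc i' r' = k -> i' = i /\ r' = r.
Proof.
move=> ha hb hc hd hxa hxb hxc hk.
have := check4_ok.
have mi : forall x n, x < n -> x \in iota 0 n by move=> x n; rewrite mem_iota.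
move=> /allPi /(_ a (mi _ _ ha)) /allPi /(_ b (mi _ _ hb)) /allPi /(_ c (mi _ _ hc)).
rewrite hd implyTb.
move=> /allPi /(_ xa (mi _ _ hxa)) /allPi /(_ xb (mi _ _ hxb)) /allPi /(_ xc (mi _ _ hxc)).
move=> /allPi /(_ k (mi _ _ hk)); rewrite count_map => hcnt.
set F := [seq p <- cands a b c | cond4 a xa b xb c xc p.1 p.2 == k].
have : size F == 1 by rewrite /F size_filter; exact: hcnt.
move: hcnt => _.
have memF : forall i r : nat, ((i, r) \in F) = [&& i < 5, r < 4, [&& i != a, i != b & i != c] & cond4 a xa b xb c xc i r == k].
  move=> i r; rewrite /F mem_filter /=.
  apply/andP/and4P.
    case=> /eqP hc4 /allpairsP [[i1 r1] [hi1 hr1 ep]].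
    rewrite mem_filter mem_iota in hi1; rewrite mem_iota in hr1.
    move: ep hi1 hr1 => /= [<- <-] /andP [hn hi1] hr1.
    split; [lia|lia|done|by rewrite hc4].
  case=> hi hr hn hc4; split => //.
  by apply: (allpairs_f (fun i r => (i, r))); rewrite ?mem_filter mem_iota //; apply/andP; split => //; lia.
case EF: F => [|[i r] [|? ?]] //= _.
have := memF i r; rewrite EF inE eqxx => /esym /and4P [hi hr hn /eqP hc4].
exists i, r; split => //.
move=> i' r' hi' hr' hn' hc'.
have := memF i' r'; rewrite EF inE hi' hr' hn' hc' eqxx /= => /eqP [-> ->]; by [].
Qed.

Lemma cond4_lt8 a xa b xb c xc i r : cond4 a xa b xb c xc i r < 8.
Proof. by rewrite /cond4; apply: col4_lt8. Qed.

Lemma split8 c r c' r' : c < 8 -> c' < 8 -> c + 8 * r = c' + 8 * r' -> c = c' /\ r = r'.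
Proof. lia. Qed.

Definition E u m k (x : hpoint 5 (4 * u)) := e m k x.1 (x.2 %% 4).

Definition col u (A : {set hpoint 5 (4 * u)}) : nat :=
  let m := 10 - \sum_(x in A) (x.1 : nat) in
  col4 m (\sum_(x in A) E m 0 x) (\sum_(x in A) E m 1 x) (\sum_(x in A) E m 2 x)
  + 8 * ((\sum_(x in A) ((x.2 : nat) %/ 4)) %% u).

Lemma col_ext u (p x1 x2 x3 : hpoint 5 (4 * u)) :
  p \notin x1 |: (x2 |: [set x3]) -> x1 \notin x2 |: [set x3] -> x2 != x3 ->
  col (p |: (x1 |: (x2 |: [set x3]))) =
  cond4 x1.1 (x1.2 %% 4) x2.1 (x2.2 %% 4) x3.1 (x3.2 %% 4) p.1 (p.2 %% 4)
  + 8 * ((p.2 %/ 4 + (x1.2 %/ 4 + (x2.2 %/ 4 + x3.2 %/ 4))) %% u).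
Proof.
move=> hp h1 h23.
have h2 : x2 \notin [set x3] by rewrite in_set1.
by rewrite /col !big_setU1 // !big_set1.
Qed.

Lemma col_dec u (hu : 0 < u) (A : {set hpoint 5 (4 * u)}) :
  exists c r, [/\ c < 8, r < u & col A = c + 8 * r].
Proof.
rewrite /col; do 2 eexists; split; last reflexivity.
  exact: col4_lt8.
exact: ltn_pmod.
Qed.

Lemma transP n g (A : {set hpoint n g}) :
  transverse A <-> {in A &, injective (fun x : hpoint n g => x.1)}.
Proof.
split.
- move=> tA x y xA yA exy.
  have /card_le1_eqP h := tA x.1.
  apply: h; rewrite inE ?xA ?yA -?exy eqxx //.
- move=> inj i; apply/card_le1_eqP => x y; rewrite !inE => /andP [xA /eqP xi] /andP [yA /eqP yi].
  by apply: inj => //; rewrite xi yi.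
Qed.

Lemma neq_fst n g (x y : hpoint n g) : (x.1 : nat) != y.1 -> x != y.
Proof. by apply: contra => /eqP ->. Qed.

Theorem lemma11 (u : nat) (hu : 0 < u) :
  exists P : {set {set {set hpoint 5 (4 * u)}}}, @large_Hset 5 (4 * u) 4 3 P.
Proof.
set T := transverse_ksets 5 (4 * u) 4.
exists (equivalence_partition (fun A B => col A == col B) T).
split.
  apply: equivalence_partitionP => x y z _ _ _ /=; split; first exact: eqxx.
  by move/eqP => ->.
move=> B /imsetP [A0 _ ->]; split.
  move=> b; rewrite inE => /andP [bT _]; move: bT; rewrite inE => /andP [/eqP cb /forallP tb].
  by split.
move=> S cS tS.
have [c [r [hc hr cA0]]] := col_dec hu A0.
have /card_gt0P [x1 Hx1] : 0 < #|S| by rewrite cS.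
have : #|S :\ x1| == 2.
  by rewrite (cardsD1 x1 S) Hx1 in cS; rewrite -(eqn_add2l 1) cS.
case/cards2P => [x2 [x3 [n23 dS]]].
have nx1 : x1 \notin x2 |: [set x3] by rewrite -dS !inE eqxx.
have eS : S = x1 |: (x2 |: [set x3]) by rewrite -dS setD1K.
move: tS; rewrite eS => /transP injS.
clear dS Hx1; subst S.
set S := x1 |: (x2 |: [set x3]).
have x1S : x1 \in S by rewrite !inE eqxx.
have x2S : x2 \in S by rewrite !inE eqxx ?orbT.
have x3S : x3 \in S by rewrite !inE eqxx ?orbT.
have n12 : x1 != x2 by move: nx1; rewrite !inE negb_or => /andP [].
have n13 : x1 != x3 by move: nx1; rewrite !inE negb_or => /andP [].
have gfact : forall x y, x \in S -> y \in S -> x != y -> (x.1 : nat) != y.1.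
  move=> x y xS yS; apply: contra => /eqP /val_inj h; apply/eqP; exact: injS.
have g12 := gfact _ _ x1S x2S n12.
have g13 := gfact _ _ x1S x3S n13.
have g23 := gfact _ _ x2S x3S n23.
have hd : [&& (x1.1 : nat) != x2.1, (x1.1 : nat) != x3.1 & (x2.1 : nat) != x3.1] by rewrite g12 g13 g23.
have [i0 [r0 [[hi0 hr0 hn0 hc0] uniq0]]] :=
  level4 (ltn_ord x1.1) (ltn_ord x2.1) (ltn_ord x3.1) hd
    (ltn_pmod x1.2 (isT : 0 < 4)) (ltn_pmod x2.2 (isT : 0 < 4)) (ltn_pmod x3.2 (isT : 0 < 4)) hc.
pose sg := x1.2 %/ 4 + (x2.2 %/ 4 + x3.2 %/ 4).
pose t0 := (r + (u - sg %% u)) %% u.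
have ht0 : t0 < u by apply: ltn_pmod.
have et0 : (t0 + sg) %% u = r.
  rewrite /t0 modnDml.
  have -> : r + (u - sg %% u) + sg = (sg %/ u).+1 * u + r.
    have dq := divn_eq sg u; have lm := ltn_pmod sg hu.
    move: (sg %/ u) (sg %% u) dq lm => q m dq lm; nia.
  by rewrite modnMDl modn_small.
have hy0 : 4 * t0 + r0 < 4 * u by lia.
pose p0 : hpoint 5 (4 * u) := (Ordinal hi0, Ordinal hy0).
have p01 : (p0.1 : nat) = i0 by [].
have p02 : (p0.2 : nat) = 4 * t0 + r0 by [].
have p0S : p0 \notin S.
  move: hn0 => /and3P [h1 h2 h3].
  rewrite !inE !negb_or; apply/and3P; split; apply: neq_fst; by rewrite p01.
have cardS : #|S| = 3 by [].
apply/eqP/cards1P; exists (p0 |: S); apply/setP => b; rewrite !inE.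
apply/idP/eqP.
  case/andP => /andP [bT cb] Sb.
  move: bT => /andP [/eqP cb4 /forallP tb].
  have injb := (proj1 (transP b)) tb.
  have : #|b :\: S| == 1 by rewrite cardsD (setIidPr Sb) cb4 cardS.
  case/cards1P => p dp.
  have : p \in b :\: S by rewrite dp set11.
  rewrite inE => /andP [pS pb].
  have eb : b = p |: S by rewrite -(setID b S) (setIidPr Sb) dp setUC.
  have gp : forall x, x \in S -> (p.1 : nat) != x.1.
    move=> x xS; apply: contra pS => /eqP /val_inj h.
    by rewrite (injb p x pb (subsetP Sb x xS) h).
  move: cb; rewrite eb col_ext // cA0 => /eqP cb.
  have [e1 e2] := split8 hc (cond4_lt8 _ _ _ _ _ _ _ _) cb.
  have [ep1 ep2] := uniq0 p.1 (p.2 %% 4) (ltn_ord _) (ltn_pmod _ (isT : 0 < 4))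
     (introT and3P (And3 (gp _ x1S) (gp _ x2S) (gp _ x3S))) (esym e1).
  have ep3 : p.2 %/ 4 = t0.
    have lt1 : p.2 %/ 4 < u by rewrite ltn_divLR // -[u * 4]mulnC.
    rewrite -(modn_small lt1) -(modn_small ht0); apply/eqP.
    by rewrite -(eqn_modDr sg) -/sg et0 -e2.
  have -> : p = p0.
    rewrite [p]surjective_pairing; congr (_, _); apply: val_inj => //=.
    by rewrite (divn_eq p.2 4) ep2 ep3 mulnC.
  by [].
move=> ->; rewrite subsetUr andbT; apply/andP; split.
  rewrite cardsU1 p0S cardS eqxx /=.
  apply/forallP => i.
  apply: ((proj2 (transP _)) _ i).
  move: hn0 => /and3P [h1 h2 h3].
  have s1 : (x1.1 : nat) != i0 by rewrite eq_sym.
  have s2 : (x2.1 : nat) != i0 by rewrite eq_sym.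
  have s3 : (x3.1 : nat) != i0 by rewrite eq_sym.
  have s12 : (x2.1 : nat) != x1.1 by rewrite eq_sym.
  have s13 : (x3.1 : nat) != x1.1 by rewrite eq_sym.
  have s23 : (x3.1 : nat) != x2.1 by rewrite eq_sym.
  move=> x y; rewrite !inE => /or4P [] /eqP -> /or4P [] /eqP -> // /(congr1 val) /eqP;
  rewrite ?p01 ?(negbTE h1, negbTE h2, negbTE h3, negbTE g12, negbTE g13, negbTE g23,
     negbTE s1, negbTE s2, negbTE s3, negbTE s12, negbTE s13, negbTE s23) //.
rewrite cA0 col_ext // p01 p02.
rewrite [4 * t0]mulnC modnMDl (modn_small hr0) divnMDl // (divn_small hr0) addn0.
by rewrite hc0 -/sg et0.
Qed.
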